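(* Let $p$ be an odd prime. Then $$\sum_{t=0}^{(p-1)/2}(-1)^t\left[\binom{\frac{p-1}{2}+t}{t}-\binom{p+\frac{p-1}{2}+t}{p+t}\right]\binom{-\frac12}{t}^2\equiv0\pmod{p^2}.$$
   Context: For a rational number $x$ and integer $t\ge0$, $\binom{x}{t}=\frac{x(x-1)\cdots(x-t+1)}{t!}$; in particular $\binom{-1/2}{t}$ is a rational number whose denominator is a power of $2$. For rationals $a,b$ whose denominators are prime to $p$, $a\equiv b\pmod{p^k}$ means that $(a-b)/p^k$ is a rational number with denominator prime to $p$. *)

(* Defs.v *)
From HB Require Import structures.
From mathcomp Require Import all_boot all_order all_algebra.
Set Implicit Arguments. Unset Strict Implicit. Unset Printing Implicit Defensive.
Import Order.TTheory GRing.Theory Num.Theory.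
Local Open Scope ring_scope.

Definition ratbin (x : rat) (t : nat) : rat :=
  (\prod_(i < t) (x - (i : nat)%:R)) / (t`!)%:R.

(* a = b (mod p^k) for rationals: (a - b)/p^k has denominator prime to p. *)
Definition rat_congr (p k : nat) (a b : rat) : Prop :=
  coprime `|denq ((a - b) / ((p ^ k)%N)%:R)|%N p.

(* Main.v *)
Require Import Defs.
From HB Require Import structures.
From mathcomp Require Import all_boot all_order all_algebra.
From mathcomp Require Import ring zify.
Import Order.TTheory GRing.Theory Num.Theory.
Local Open Scope ring_scope.

Definition pint (p : nat) (x : rat) :=
  exists (a : int) (b : nat), [/\ (0 < b)%N, coprime b p & x = a%:~R / b%:R].

Lemma pint_int p (z : int) : pint p z%:~R.
Proof. exists z, 1%N; split => //; first exact: coprime1n. by rewrite divr1. Qed.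

Lemma pint_nat p (m : nat) : pint p m%:R.
Proof. by have := pint_int p m; rewrite pmulrn. Qed.

Lemma pintD p x y : pint p x -> pint p y -> pint p (x + y).
Proof.
move=> [a [b [b0 cb ->]]] [c [d [d0 cd ->]]].
exists (a * d%:Z + c * b%:Z), (b * d)%N; split.
- by rewrite muln_gt0 b0 d0.
- by rewrite coprimeMl cb cd.
have hb : (b%:R : rat) != 0 by rewrite pnatr_eq0 -lt0n.
have hd : (d%:R : rat) != 0 by rewrite pnatr_eq0 -lt0n.
rewrite natrM rmorphD !rmorphM /= !pmulrn.
by field; rewrite hb hd.
Qed.

Lemma pintM p x y : pint p x -> pint p y -> pint p (x * y).
Proof.
move=> [a [b [b0 cb ->]]] [c [d [d0 cd ->]]].
exists (a * c), (b * d)%N; split.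
- by rewrite muln_gt0 b0 d0.
- by rewrite coprimeMl cb cd.
have hb : (b%:R : rat) != 0 by rewrite pnatr_eq0 -lt0n.
have hd : (d%:R : rat) != 0 by rewrite pnatr_eq0 -lt0n.
rewrite natrM rmorphM /=.
by field; rewrite hb hd.
Qed.

Lemma pintN p x : pint p x -> pint p (- x).
Proof. move=> h; rewrite -mulN1r; apply: pintM => //; exact: (pint_int p (-1)). Qed.

Lemma pintB p x y : pint p x -> pint p y -> pint p (x - y).
Proof. by move=> hx hy; apply: pintD => //; apply: pintN. Qed.

Lemma pint_invn p (m : nat) : (0 < m)%N -> coprime m p -> pint p (m%:R)^-1.
Proof. move=> m0 cm; exists 1, m; split => //; by rewrite div1r. Qed.

Lemma pint_den p x : pint p x -> coprime `|denq x|%N p.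
Proof.
move=> [a [b [b0 cb ex]]].
apply: coprime_dvdl cb.
have hb : (b%:R : rat) != 0 by rewrite pnatr_eq0 -lt0n.
have hd : ((denq x)%:~R : rat) != 0 by rewrite intr_eq0 denq_neq0.
have e1 : (numq x * b%:Z) = a * denq x.
  apply/eqP; rewrite -(eqr_int rat) !rmorphM /= numqE ex pmulrn.
  apply/eqP; field; by rewrite hb.
have e2 : (`|numq x| * b = `|a| * `|denq x|)%N.
  by rewrite -[b in LHS]absz_nat -!abszM e1.
have : (`|denq x| %| `|numq x| * b)%N by rewrite e2 dvdn_mull.
by rewrite Gauss_dvdr // coprime_sym coprime_num_den.
Qed.

Ltac pint_tac := repeat first [ assumption | apply: pintD | apply: pintB | apply: pintM
  | apply: pintN | apply: pint_nat | apply: pint_int ].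

Definition Ltr p (a b c : rat) := pint p b /\ exists al r s,
  [/\ pint p al, pint p r, pint p s, c = b + p%:R * al + p%:R ^+ 2 * r
    & a = b - p%:R * al + p%:R ^+ 2 * s].

Lemma Ltr_cst p c : pint p c -> Ltr p c c c.
Proof.
move=> h; split => //; exists 0, 0, 0; split; rewrite ?mulr0 ?addr0 ?subr0 //;
 exact: (pint_nat p 0).
Qed.

Lemma Ltr_lin p a x c : pint p x -> a = x - p%:R -> c = x + p%:R -> Ltr p a x c.
Proof.
move=> h -> ->; split => //; exists 1, 0, 0; split; rewrite ?mulr0 ?addr0 ?mulr1 //;
 try exact: (pint_nat p 0); exact: (pint_nat p 1).
Qed.

Lemma Ltr_add p a b c a' b' c' : Ltr p a b c -> Ltr p a' b' c' ->
  Ltr p (a + a') (b + b') (c + c').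
Proof.
move=> [hb [al [r [s [ha hr hs -> ->]]]]] [hb' [al' [r' [s' [ha' hr' hs' -> ->]]]]].
split; first by pint_tac.
exists (al + al'), (r + r'), (s + s'); split; try by pint_tac.
- by ring. - by ring.
Qed.

Lemma Ltr_mul p a b c a' b' c' : Ltr p a b c -> Ltr p a' b' c' ->
  Ltr p (a * a') (b * b') (c * c').
Proof.
move=> [hb [al [r [s [ha hr hs -> ->]]]]] [hb' [al' [r' [s' [ha' hr' hs' -> ->]]]]].
split; first by pint_tac.
exists (al * b' + b * al'),
  (al * al' + b * r' + r * b' + p%:R * (al * r' + r * al') + p%:R ^+ 2 * r * r'),
  (al * al' + b * s' + s * b' - p%:R * (al * s' + s * al') + p%:R ^+ 2 * s * s').
split; try by pint_tac.
- by ring. - by ring.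
Qed.

Lemma Ltr_prod p m (A B C : 'I_m -> rat) : (forall i, Ltr p (A i) (B i) (C i)) ->
  Ltr p (\prod_(i < m) A i) (\prod_(i < m) B i) (\prod_(i < m) C i).
Proof.
elim: m A B C => [|m IH] A B C h.
  by rewrite !big_ord0; apply: Ltr_cst; exact: (pint_nat p 1).
rewrite !big_ord_recr /=; apply: Ltr_mul => //; exact: IH.
Qed.

Lemma Ltr_sum p m (A B C : 'I_m -> rat) : (forall i, Ltr p (A i) (B i) (C i)) ->
  Ltr p (\sum_(i < m) A i) (\sum_(i < m) B i) (\sum_(i < m) C i).
Proof.
elim: m A B C => [|m IH] A B C h.
  by rewrite !big_ord0; apply: Ltr_cst; exact: (pint_nat p 0).
rewrite !big_ord_recr /=; apply: Ltr_add => //; exact: IH.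
Qed.

Definition Eqp p (a b : rat) := [/\ pint p a, pint p b & exists r, pint p r /\ a = b + p%:R * r].

Lemma Eqp_mul p a b a' b' : Eqp p a b -> Eqp p a' b' -> Eqp p (a * a') (b * b').
Proof.
move=> [ha hb [r [hr ->]]] [ha' hb' [r' [hr' ->]]].
split; try by pint_tac.
exists (r * b' + b * r' + p%:R * r * r'); split; first by pint_tac.
by ring.
Qed.

Lemma Eqp_cst p c : pint p c -> Eqp p c c.
Proof. move=> h; split => //; exists 0; split; [exact: (pint_nat p 0)|by rewrite mulr0 addr0]. Qed.

Lemma Eqp_prod p m (A B : 'I_m -> rat) : (forall i, Eqp p (A i) (B i)) ->
  Eqp p (\prod_(i < m) A i) (\prod_(i < m) B i).
Proof.
move=> h; apply: (big_ind2 (Eqp p)) => //.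
  apply: Eqp_cst; exact: (pint_nat p 1).
by move=> *; apply: Eqp_mul.
Qed.

Definition Z2 p (x : rat) := exists r, pint p r /\ x = p%:R ^+ 2 * r.

Lemma Z2_sum p m (A : 'I_m -> rat) : (forall i, Z2 p (A i)) -> Z2 p (\sum_(i < m) A i).
Proof.
move=> h; apply: (big_ind (Z2 p)) => //.
  exists 0; split; [exact: (pint_nat p 0)|by rewrite mulr0].
move=> x y [r [hr ->]] [s [hs ->]]; exists (r + s); split; first by pint_tac.
by ring.
Qed.

Lemma pintX p x k : pint p x -> pint p (x ^+ k).
Proof. move=> h; elim: k => [|k IH]; first exact: (pint_nat p 1). by rewrite exprS; pint_tac. Qed.

Lemma coprime_fact p t : prime p -> (t < p)%N -> coprime t`! p.
Proof.
move=> hp; elim: t => [|t IH] ht; first by rewrite fact0 coprime1n.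
rewrite factS coprimeMl IH ?andbT; last exact: ltnW.
rewrite coprime_sym prime_coprime //; apply/negP => /dvdn_leq.
by move=> /(_ isT); rewrite leqNgt ht.
Qed.

Lemma ratbinS x k : ratbin x k.+1 = ratbin x k * (x - k%:R) / (k.+1)%:R.
Proof.
rewrite /ratbin big_ord_recr factS natrM /=.
have h1 : ((k`!)%:R : rat) != 0 by rewrite pnatr_eq0 -lt0n fact_gt0.
have h2 : ((k.+1)%:R : rat) != 0 by rewrite pnatr_eq0.
by field; rewrite h1 andbT addrC natr1.
Qed.

Lemma ratbin_nat (N k : nat) : ratbin N%:R k = 'C(N, k)%:R.
Proof.
elim: k => [|k IH]; first by rewrite /ratbin big_ord0 bin0 fact0 divr1.
rewrite ratbinS IH.
have h2 : ((k.+1)%:R : rat) != 0 by rewrite pnatr_eq0.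
case: (leqP k N) => hk.
  have := mul_bin_left N k => /(congr1 (fun m => m%:R : rat)).
  rewrite !natrM natrB // => e.
  by apply: (mulIf h2); rewrite mulfVK // mulrC -e mulrC.
by rewrite !bin_small ?mul0r // ltnW.
Qed.

Lemma ratbin_neg n z : ratbin (-1 - z) n = (-1) ^+ n * ratbin (z + n%:R) n.
Proof.
rewrite /ratbin mulrA; congr (_ / _).
have -> : \prod_(i < n) (-1 - z - (i : nat)%:R) = \prod_(i < n) (-1 * (z + 1 + (i : nat)%:R)).
  by apply: eq_bigr => i _; ring.
rewrite big_split /= prodr_const card_ord; congr (_ * _).
rewrite (reindex_inj rev_ord_inj) /=; apply: eq_bigr => i _.
rewrite natrB ?ltn_ord // -[i.+1]addn1 natrD; ring.
Qed.

Definition H n (y : rat) := \sum_(t < n.+1) (-1) ^+ t * ('C(n, t)%:R) ^+ 2 * ratbin (y + (t : nat)%:R) n.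

Lemma H_sym n y : H n (-1 - y) = H n y.
Proof.
rewrite /H (reindex_inj rev_ord_inj) /=; apply: eq_bigr => t _.
have ht : (t <= n)%N by rewrite -ltnS ltn_ord.
rewrite subSS bin_sub //.
rewrite (_ : -1 - y + (n - t)%:R = -1 - (y + t%:R - n%:R)); last by rewrite natrB //; ring.
rewrite ratbin_neg (_ : y + t%:R - n%:R + n%:R = y + t%:R); last by ring.
have -> : (-1) ^+ n = (-1) ^+ (n - t) * (-1) ^+ t :> rat by rewrite -exprD subnK.
have hs : (-1) ^+ (n - t) * (-1) ^+ (n - t) = 1 :> rat.
  by rewrite -expr2 -exprM mulnC exprM sqrrN expr1n.
transitivity ((-1) ^+ (n - t) * (-1) ^+ (n - t) * ((-1) ^+ t * ('C(n, t)%:R) ^+ 2 * ratbin (y + t%:R) n)); first by ring.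
by rewrite hs mul1r.
Qed.

Lemma rb_Ltr p n x : (0 < n`!)%N -> coprime n`! p -> pint p x ->
  Ltr p (ratbin (x - p%:R) n) (ratbin x n) (ratbin (x + p%:R) n).
Proof.
move=> h0 hc hx; rewrite /ratbin; apply: Ltr_mul.
  apply: Ltr_prod => i; apply: (@Ltr_lin _ _ (x - (i : nat)%:R)); first by pint_tac.
  - by ring.
  - by ring.
by apply: Ltr_cst; apply: pint_invn.
Qed.

Lemma pint_m1 p : pint p (-1).
Proof. apply: pintN; exact: (pint_nat p 1). Qed.

Lemma H_Ltr p n y : coprime n`! p -> pint p y ->
  Ltr p (H n (y - p%:R)) (H n y) (H n (y + p%:R)).
Proof.
move=> hc hy; rewrite /H; apply: Ltr_sum => t; apply: Ltr_mul.
  apply: Ltr_cst; apply: pintM; apply: pintX; [exact: pint_m1 | exact: pint_nat].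
rewrite (_ : y - p%:R + (t : nat)%:R = y + (t : nat)%:R - p%:R); last by ring.
rewrite (_ : y + p%:R + (t : nat)%:R = y + (t : nat)%:R + p%:R); last by ring.
apply: rb_Ltr => //; [exact: fact_gt0 | by pint_tac].
Qed.

Lemma rb_Eqp p n t : (2 * n%:R + 1 = p%:R :> rat) -> coprime 2 p -> coprime t`! p ->
  Eqp p (ratbin (-1 / 2) t) (ratbin n%:R t).
Proof.
move=> hP h2 hc.
have i2 : pint p (2%:R)^-1 by apply: pint_invn.
have hm : pint p (-1 / 2) by rewrite /= mulN1r; apply: pintN.
rewrite /ratbin; apply: Eqp_mul; last by apply: Eqp_cst; apply: pint_invn => //; exact: fact_gt0.
apply: Eqp_prod => i; split; try by pint_tac.
exists (-1 / 2); split => //.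
by rewrite -hP; field.
Qed.

Theorem lemma2p16 (p : nat) (hp : prime p) (hodd : odd p) :
  rat_congr p 2
    (\sum_(t < (p.-1)./2.+1)
        (-1) ^+ t *
        (('C((p.-1)./2 + t, t))%:R - ('C(p + (p.-1)./2 + t, p + t))%:R)
        * ratbin (-1 / 2) t ^+ 2)
    0.
Proof.
set n := (p.-1)./2.
have hpn : p = n.*2.+1 by rewrite /n; lia.
have hP : 2 * n%:R + 1 = p%:R :> rat by rewrite hpn -[(n.*2).+1]addn1 natrD -[n.*2]muln2 natrM; ring.
have h2 : coprime 2 p by rewrite coprime2n.
have hfact : forall t, (t <= n)%N -> coprime t`! p.
  move=> t ht; apply: coprime_fact => //; rewrite hpn; lia.
have hcn : coprime n`! p by apply: hfact.
set P := (p%:R : rat).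
set S := \sum_(t < n.+1) _.
suff [r [hr hS]] : Z2 p S.
  rewrite /rat_congr subr0 natrX -/P hS.
  have hP0 : P ^+ 2 != 0 by rewrite expf_eq0 /P pnatr_eq0 hpn.
  by rewrite [_ * r]mulrC mulfK //; apply: pint_den.
have hD : Z2 p (H n n%:R - H n (n%:R + P)).
  have [_ [al [r [s [hal hr hs e1 e2]]]]] := H_Ltr _ _ _ hcn (pint_nat p n).
  have e3 : H n (n%:R - P) = H n n%:R.
    by rewrite -H_sym; congr (H n _); rewrite /P -hP; ring.
  rewrite e3 in e2.
  have hP0 : P != 0 by rewrite /P pnatr_eq0 hpn.
  have eal : al = P * s.
    apply: (mulfI hP0); apply: (addrI (H n n%:R)).
    rewrite {1}e2; ring.
  exists (- (s + r)); split; first by pint_tac.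
  rewrite -/P e1 eal; ring.
rewrite -(subrK (H n n%:R - H n (n%:R + P)) S).
have Z2D : forall x y, Z2 p x -> Z2 p y -> Z2 p (x + y).
  move=> x y [a [ha ->]] [b [hb ->]]; exists (a + b); split; first by pint_tac.
  by ring.
apply: Z2D => //.
rewrite /S /H -sumrB -sumrB; apply: Z2_sum => t.
have ht : (t <= n)%N by rewrite -ltnS ltn_ord.
have e1 : 'C(n + t, t) = 'C(n + t, n).
  rewrite -(@bin_sub (n + t) t); last by lia.
  by congr 'C(_, _); lia.
have e2 : 'C(p + n + t, p + t) = 'C(p + n + t, n).
  rewrite -(@bin_sub (p + n + t) (p + t)); last by lia.
  by congr 'C(_, _); lia.
rewrite e1 e2 -!ratbin_nat.
rewrite (_ : ((n + t)%N%:R : rat) = n%:R + (t : nat)%:R); last by rewrite natrD.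
rewrite (_ : ((p + n + t)%N%:R : rat) = (n%:R + (t : nat)%:R) + P); last by rewrite !natrD /P; ring.
rewrite (_ : n%:R + P + (t : nat)%:R = (n%:R + (t : nat)%:R) + P); last by ring.
have [_ _ [r [hr er]]] := Eqp_mul _ _ _ _ _ (rb_Eqp _ _ _ hP h2 (hfact t ht)) (rb_Eqp _ _ _ hP h2 (hfact t ht)).
have [_ [al [r' [s' [hal hr' hs' ec _]]]]] := rb_Ltr _ _ _ (fact_gt0 n) hcn (pint_nat p (n + t)).
rewrite natrD in ec.
rewrite -expr2 in er.
rewrite er ec.
exists ((-1) ^+ t * - (al + P * r') * r); split.
  apply: pintM => //; apply: pintM; [apply: pintX; exact: pint_m1 | by pint_tac].
rewrite ratbin_nat; ring.
Qed.
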